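(* Let $G=(V,E)$ be a simple 2-vertex-connected graph without irrelevant edges and without non-isolating 2-vertex-cuts. Let $(V_1,V_2)$ be a partition of $V$ such that for each $i\in\{1,2\}$, $|V_i|\ge 3$, and if $|V_i|=3$ then $G[V_i]$ is a triangle. Then there is a matching of size $3$ in $G$ consisting of edges each having one endpoint in $V_1$ and one in $V_2$.
   Context: A $k$-vertex-cut is a set of $k$ nodes whose removal disconnects the graph; a graph is 2-vertex-connected if it has at least 3 nodes, is connected and has no 1-vertex-cut. An edge $uv$ is irrelevant if $\{u,v\}$ is a 2-vertex-cut. A 2-vertex-cut $\{u,v\}$ is isolating if $G\setminus\{u,v\}$ has exactly two connected components, one of which consists of a single node; otherwise it is non-isolating. *)

(* Defs.v *)
From mathcomp Require Import all_boot.
Set Implicit Arguments. Unset Strict Implicit. Unset Printing Implicit Defensive.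

(* A simple graph: vertex type T : finType, adjacency e : rel T, assumed
   symmetric and irreflexive in the theorem. *)

Definition induced (T : finType) (e : rel T) (S : {set T}) : rel T :=
  [rel x y | [&& x \in S, y \in S & e x y]].

Definition connected_on (T : finType) (e : rel T) (S : {set T}) : Prop :=
  forall x y, x \in S -> y \in S -> connect (induced e S) x y.

Definition disconnects (T : finType) (e : rel T) (C : {set T}) : Prop :=
  ~ connected_on e (~: C).

Definition two_vertex_connected (T : finType) (e : rel T) : Prop :=
  [/\ 3 <= #|T|, connected_on e [set: T] & forall v : T, ~ disconnects e [set v]].

Definition two_cut (T : finType) (e : rel T) (u v : T) : Prop :=
  u != v /\ disconnects e [set u; v].

Definition irrelevant_edge (T : finType) (e : rel T) (u v : T) : Prop :=
  e u v /\ two_cut e u v.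

Definition components (T : finType) (e : rel T) (S : {set T}) : {set {set T}} :=
  [set [set y in S | connect (induced e S) x y] | x in S].

Definition isolating_cut (T : finType) (e : rel T) (u v : T) : Prop :=
  two_cut e u v /\
  (#|components e (~: [set u; v])| = 2 /\
   exists2 K, K \in components e (~: [set u; v]) & #|K| = 1).

Definition non_isolating_cut (T : finType) (e : rel T) (u v : T) : Prop :=
  two_cut e u v /\ ~ isolating_cut e u v.

(* Main.v *)
Require Import Defs.
From mathcomp Require Import all_boot.
From Stdlib Require Import Classical.
Set Implicit Arguments. Unset Strict Implicit. Unset Printing Implicit Defensive.

Definition M3 (T : finType) (e : rel T) (V1 V2 : {set T}) : Prop :=
  exists a1 a2 a3 b1 b2 b3 : T,
    [/\ [&& a1 \in V1, a2 \in V1 & a3 \in V1],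
        [&& b1 \in V2, b2 \in V2 & b3 \in V2],
        [&& e a1 b1, e a2 b2 & e a3 b3],
        [&& a1 != a2, a1 != a3 & a2 != a3] &
        [&& b1 != b2, b1 != b3 & b2 != b3]].

Definition covers (T : finType) (e : rel T) (V1 V2 : {set T}) (u v : T) :=
  forall a b, a \in V1 -> b \in V2 -> e a b -> [|| a == u, a == v, b == u | b == v].

Ltac m3 NM x1 x2 x3 y1 y2 y3 :=
  exfalso; apply: NM; exists x1, x2, x3, y1, y2, y3;
  split; apply/and3P; split; first [done | by rewrite eq_sym].

Lemma cover_ex (T : finType) (e : rel T) (V1 V2 : {set T}) (x0 : T) :
  ~ M3 e V1 V2 -> exists u v, covers e V1 V2 u v.
Proof.
move=> NM.
case: (classic (exists a b, [/\ a \in V1, b \in V2 & e a b])) =>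
  [[a1 [b1 [Ha1 Hb1 E1]]] | H0]; last first.
  by exists x0, x0 => a b Ha Hb Eab; exfalso; apply H0; exists a, b.
case: (classic (exists a b, [/\ a \in V1, b \in V2, e a b, a != a1 & b != b1]))
  => [[a2 [b2 [Ha2 Hb2 E2 na nb]]]|H1]; last first.
  exists a1, b1 => a b Ha Hb Eab.
  have [_|na] := eqVneq a a1; first by rewrite ?orbT.
  have [_|nb] := eqVneq b b1; first by rewrite ?orbT.
  by exfalso; apply: H1; exists a, b.
have Hall : forall a b, a \in V1 -> b \in V2 -> e a b ->
   [|| a == a1, a == a2, b == b1 | b == b2].
  move=> a b Ha Hb Eab.
  have [_|n1] := eqVneq a a1; first by rewrite ?orbT.
  have [_|n2] := eqVneq a a2; first by rewrite ?orbT.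
  have [_|n3] := eqVneq b b1; first by rewrite ?orbT.
  have [_|n4] := eqVneq b b2; first by rewrite ?orbT.
  m3 NM a1 a2 a b1 b2 b.
pose Fa1 := exists b, [/\ b \in V2, e a1 b, b != b1 & b != b2].
pose Fa2 := exists b, [/\ b \in V2, e a2 b, b != b1 & b != b2].
pose Fb1 := exists a, [/\ a \in V1, e a b1, a != a1 & a != a2].
pose Fb2 := exists a, [/\ a \in V1, e a b2, a != a1 & a != a2].
have f1 : ~ (Fa1 /\ Fb1).
  by case=> [[b [Hb Eb n1 n2]] [a [Ha Ea m1 m2]]]; m3 NM a1 a a2 b b1 b2.
have f2 : ~ (Fa2 /\ Fb2).
  by case=> [[b [Hb Eb n1 n2]] [a [Ha Ea m1 m2]]]; m3 NM a1 a2 a b1 b b2.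
have f3 : ~ [/\ Fa1, Fb2 & e a2 b1].
  by case=> [[b [Hb Eb n1 n2]] [a [Ha Ea m1 m2]] E]; m3 NM a1 a2 a b b1 b2.
have f4 : ~ [/\ Fb1, Fa2 & e a1 b2].
  by case=> [[a [Ha Ea m1 m2]] [b [Hb Eb n1 n2]] E]; m3 NM a a2 a1 b1 b b2.
have c12 : ~ Fb1 -> ~ Fb2 -> covers e V1 V2 a1 a2.
  move=> nF1 nF2 a b Ha Hb Eab.
  have [_|m1] := eqVneq a a1; first by rewrite ?orbT.
  have [_|m2] := eqVneq a a2; first by rewrite ?orbT.
  move: (Hall a b Ha Hb Eab); rewrite (negbTE m1) (negbTE m2) /= => /orP[]/eqP Eb.
    by exfalso; apply: nF1; exists a; rewrite -Eb.
  by exfalso; apply: nF2; exists a; rewrite -Eb.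
have d12 : ~ Fa1 -> ~ Fa2 -> covers e V1 V2 b1 b2.
  move=> nF1 nF2 a b Ha Hb Eab.
  have [_|m1] := eqVneq b b1; first by rewrite ?orbT.
  have [_|m2] := eqVneq b b2; first by rewrite ?orbT.
  move: (Hall a b Ha Hb Eab); rewrite (negbTE m1) (negbTE m2) !orbF => /orP[]/eqP Ea.
    by exfalso; apply: nF1; exists b; rewrite -Ea.
  by exfalso; apply: nF2; exists b; rewrite -Ea.
have c1 : ~ Fb1 -> ~ Fa2 -> ~~ e a2 b1 -> covers e V1 V2 a1 b2.
  move=> nF1 nF2 nE a b Ha Hb Eab.
  have [_|m1] := eqVneq a a1; first by rewrite ?orbT.
  have [_|m2] := eqVneq b b2; first by rewrite ?orbT.
  exfalso.
  have [Ea|m3] := eqVneq a a2.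
    have [Eb|m4] := eqVneq b b1; first by move: nE; rewrite -Ea -Eb Eab.
    by apply: nF2; exists b; rewrite -Ea.
  move: (Hall a b Ha Hb Eab); rewrite (negbTE m1) (negbTE m2) (negbTE m3) !orbF => /eqP Eb.
  by apply: nF1; exists a; rewrite -Eb.
have c2 : ~ Fa1 -> ~ Fb2 -> ~~ e a1 b2 -> covers e V1 V2 a2 b1.
  move=> nF1 nF2 nE a b Ha Hb Eab.
  have [_|m1] := eqVneq a a2; first by rewrite ?orbT.
  have [_|m2] := eqVneq b b1; first by rewrite ?orbT.
  exfalso.
  have [Ea|m3] := eqVneq a a1.
    have [Eb|m4] := eqVneq b b2; first by move: nE; rewrite -Ea -Eb Eab.
    by apply: nF1; exists b; rewrite -Ea.
  move: (Hall a b Ha Hb Eab); rewrite (negbTE m1) (negbTE m2) (negbTE m3) /= => /eqP Eb.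
  by apply: nF2; exists a; rewrite -Eb.
case: (classic Fa1) => hA1; case: (classic Fb1) => hB1;
case: (classic Fa2) => hA2; case: (classic Fb2) => hB2;
  try (by exfalso; apply: f1); try (by exfalso; apply: f2).
- by exists a1, a2; apply: c12.
- case E: (e a2 b1); first by exfalso; apply: f3; split.
  by exists a1, b2; apply: c1 => //; rewrite E.
- by exists a1, a2; apply: c12.
- case E: (e a1 b2); first by exfalso; apply: f4; split.
  by exists a2, b1; apply: c2 => //; rewrite E.
- by exists b1, b2; apply: d12.
- by exists b1, b2; apply: d12.
- by exists a1, a2; apply: c12.
- by exists b1, b2; apply: d12.
- by exists b1, b2; apply: d12.
Qed.

Lemma avoid2 (T : finType) (A : {set T}) (u v : T) :
  3 <= #|A| -> exists x, [/\ x \in A, x != u & x != v].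
Proof.
move=> H; apply: NNPP => N.
have sub : A \subset [set u; v].
  apply/subsetP => x xA; rewrite !inE.
  case: (eqVneq x u) => //= nu; case: (eqVneq x v) => //= nv.
  by exfalso; apply: N; exists x.
move: (subset_leq_card sub); rewrite cards2.
by case: (u != v) => /= L; move: (leq_trans H L).
Qed.

Lemma three_card (T : finType) (X : {set T}) a b c :
  a \in X -> b \in X -> c \in X -> a != b -> a != c -> b != c -> 3 <= #|X|.
Proof.
move=> aX bX cX ab ac bc.
have sub : [set a; b; c] \subset X.
  by apply/subsetP => x; rewrite !inE => /orP[/orP[]|]/eqP->.
apply: leq_trans (subset_leq_card sub).
by rewrite -setUA cardsU1 cards2 !inE negb_or ab ac bc.
Qed.

Lemma noconn (T : finType) (e : rel T) (V1 V2 : {set T}) (u v x y : T) :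
  symmetric e -> [disjoint V1 & V2] -> V1 :|: V2 = [set: T] -> covers e V1 V2 u v ->
  x \in V1 -> y \in V2 -> connect (induced e (~: [set u; v])) x y -> False.
Proof.
move=> es dis un cov xV yV C.
have V2P : forall z, z \notin V1 -> z \in V2.
  by move=> z zn; move: (in_setT z); rewrite -un inE (negbTE zn).
have cl : closed (induced e (~: [set u; v])) V1.
  move=> a b; rewrite /induced /= !inE !negb_or => /and3P[/andP[au av] /andP[bu bv] E].
  case aV: (a \in V1); case bV: (b \in V1) => //.
    move: (cov a b aV (V2P _ (negbT bV)) E).
    by rewrite (negbTE au) (negbTE av) (negbTE bu) (negbTE bv).
  rewrite es in E; move: (cov b a bV (V2P _ (negbT aV)) E).
  by rewrite (negbTE au) (negbTE av) (negbTE bu) (negbTE bv).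
move: (closed_connect cl C); rewrite xV => /esym y1.
by move: (disjointFr dis y1); rewrite yV.
Qed.

Lemma finish (T : finType) (e : rel T) (V1 V2 : {set T}) (u v w y : T) :
  symmetric e -> [disjoint V1 & V2] -> V1 :|: V2 = [set: T] -> covers e V1 V2 u v ->
  (#|V1| = 3 -> {in V1 &, forall x y, x != y -> e x y}) -> 3 <= #|V1| ->
  u != v -> ~ e u v -> y \in V2 -> y \in ~: [set u; v] ->
  #|components e (~: [set u; v])| = 2 ->
  w \in V1 -> w \in ~: [set u; v] ->
  [set z in ~: [set u; v] | connect (induced e (~: [set u; v])) w z] = [set w] -> False.
Proof.
move=> es dis un cov tri h1 uv neuv yV yS c2 wV wS Kw.
set S := ~: [set u; v] in yS c2 wS Kw.
pose comp z := [set t in S | connect (induced e S) z t].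
have cin : forall z, z \in S -> comp z \in components e S.
  by move=> z zS; apply: imset_f.
have self : forall z, z \in S -> z \in comp z.
  by move=> z zS; rewrite inE zS connect0.
have yw : y != w.
  by apply/eqP => E; move: (disjointFr dis wV); rewrite -E yV.
have sub : V1 \subset [set u; v; w].
  apply/subsetP => z zV; apply: NNPP => zn.
  have zS : z \in S.
    by rewrite !inE negb_or; move: zn; rewrite !inE; case: (z == u); case: (z == v).
  have zw : z != w by apply/negP => /eqP E; apply: zn; rewrite E !inE eqxx orbT.
  suff : 3 <= 2 by [].
  rewrite -[X in _ <= X]c2. apply: (three_card (cin w wS) (cin z zS) (cin y yS)).
  - apply/eqP => E; move: (self z zS); rewrite -E /comp Kw inE.
    by rewrite (negbTE zw).
  - apply/eqP => E; move: (self y yS); rewrite -E /comp Kw inE.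
    by rewrite (negbTE yw).
  - apply/eqP => E; move: (self y yS); rewrite -E /comp inE => /andP[_ C].
    exact: (noconn es dis un cov zV yV C).
have c3 : #|[set u; v; w]| <= 3.
  by rewrite -setUA cardsU1 cards2; case: (u \notin _); case: (v != w).
have e3 : #|V1| = 3.
  by apply/eqP; rewrite eqn_leq h1 andbT; apply: leq_trans (subset_leq_card sub) c3.
have EV : V1 = [set u; v; w].
  by apply/eqP; rewrite eqEcard sub e3.
apply: neuv; apply: (tri e3); rewrite ?EV ?inE ?eqxx ?orbT //.
Qed.

Theorem lemma3 (T : finType) (e : rel T) (V1 V2 : {set T}) :
  symmetric e -> irreflexive e ->
  two_vertex_connected e ->
  (forall u v : T, ~ irrelevant_edge e u v) ->
  (forall u v : T, ~ non_isolating_cut e u v) ->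
  [disjoint V1 & V2] -> V1 :|: V2 = [set: T] ->
  3 <= #|V1| -> (#|V1| = 3 -> {in V1 &, forall x y, x != y -> e x y}) ->
  3 <= #|V2| -> (#|V2| = 3 -> {in V2 &, forall x y, x != y -> e x y}) ->
  exists a1 a2 a3 b1 b2 b3 : T,
    [/\ [&& a1 \in V1, a2 \in V1 & a3 \in V1],
        [&& b1 \in V2, b2 \in V2 & b3 \in V2],
        [&& e a1 b1, e a2 b2 & e a3 b3],
        [&& a1 != a2, a1 != a3 & a2 != a3] &
        [&& b1 != b2, b1 != b3 & b2 != b3]].
Proof.
move=> es ir [c3 cT c1] nirr nnon dis un h1 t1 h2 t2.
apply: NNPP => NM.
have [x0 _] : exists x0, x0 \in V1 by apply/card_gt0P; apply: leq_trans h1.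
have [u [v cov]] := cover_ex x0 NM.
have [x [xV xu xv]] := avoid2 u v h1.
have [y [yV yu yv]] := avoid2 u v h2.
have xS : x \in ~: [set u; v] by rewrite !inE negb_or xu xv.
have yS : y \in ~: [set u; v] by rewrite !inE negb_or yu yv.
have dc : disconnects e [set u; v].
  by move=> conn; exact: (noconn es dis un cov xV yV (conn x y xS yS)).
have uv : u != v.
  apply/eqP => E; subst v; apply: (c1 u); by rewrite setUid in dc.
have tc : two_cut e u v by split.
have neuv : ~ e u v by move=> E; apply: (nirr u v).
have iso : isolating_cut e u v by apply: NNPP => n; apply: (nnon u v).
case: iso => _ [c2 [K Kin K1]].
case/imsetP: Kin => w wS Kdef.
have Kw : [set z in ~: [set u; v] | connect (induced e (~: [set u; v])) w z] = [set w].
  move/eqP: K1 => /cards1P [t Kt].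
  have wK : w \in K by rewrite Kdef inE wS connect0.
  by rewrite -Kdef Kt; move: wK; rewrite Kt inE => /eqP ->.
case wV: (w \in V1).
  exact: (finish es dis un cov t1 h1 uv neuv yV yS c2 wV wS Kw).
have wV2 : w \in V2 by move: (in_setT w); rewrite -un inE wV.
have cov' : covers e V2 V1 u v.
  move=> a b aV bV E; rewrite es in E; move: (cov b a bV aV E).
  by case: (a == u); case: (a == v); case: (b == u); case: (b == v).
have neuv' : ~ e u v by [].
refine (finish es _ _ cov' t2 h2 uv neuv xV xS c2 wV2 wS Kw).
  by rewrite disjoint_sym.
by rewrite setUC.
Qed.
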